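(* In the linear setting described in the context, let $\mathbf P_t^s$ be defined by $\mathbf P_t^0=\mathbf P_t$ and $\mathbf P_t^{s+1}=\boldsymbol\theta_{t-s-1}^{-1}\mathbf P_t^s\boldsymbol\theta_{t-s-1}$ ($0\le s<t\le T$). Then for each $0\le s\le T$, $$\|\mathbf P_s^s-\mathbf P_0\|_2\le\big(1+\kappa(\overline{\boldsymbol\theta}_s)^2\big)\,\|\mathbf I-\overline{\boldsymbol\theta}_s^T\overline{\boldsymbol\theta}_s\|_2,$$ where $\overline{\boldsymbol\theta}_0=\mathbf I$ and $\overline{\boldsymbol\theta}_s=\boldsymbol\theta_{s-1}\cdots\boldsymbol\theta_0$ for $s\ge1$.
   Context: Linear setting: fix integers $1\le r\le d$ and $T\ge1$. For $t=0,\dots,T$, $Z^t\subset\mathbb{R}^d$ is an $r$-dimensional linear subspace and $\mathbf P_t$ is the orthogonal projection onto $Z^t$. For $t=0,\dots,T-1$, $\boldsymbol\theta_t\in\mathbb{R}^{d\times d}$ is invertible with $\boldsymbol\theta_tZ^t=Z^{t+1}$. $\|\cdot\|_2$ is the spectral norm and $\kappa(\mathbf A)=\|\mathbf A\|_2\|\mathbf A^{-1}\|_2$. *)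

(* Defs.v *)
From HB Require Import structures.
From mathcomp Require Import all_boot all_order all_algebra.
From mathcomp Require Import classical_sets reals.
Set Implicit Arguments. Unset Strict Implicit. Unset Printing Implicit Defensive.
Import Order.TTheory GRing.Theory Num.Theory.
Local Open Scope ring_scope.
Local Open Scope classical_set_scope.

Section Defs.
Variable R : realType.
Variable d : nat.

Definition vnorm (v : 'cV[R]_d) : R := Num.sqrt (\sum_i (v i 0) ^+ 2).

Definition opnorm (A : 'M[R]_d) : R :=
  sup [set vnorm (A *m v) | v in [set v : 'cV[R]_d | vnorm v = 1]].

Definition kappa (A : 'M[R]_d) : R := opnorm A * opnorm (invmx A).

(* A linear subspace of R^d is represented by a matrix Z whose row space
   (in mxalgebra) spans it; column vector v lies in it iff v^T is in that row space. *)
Definition insub (Z : 'M[R]_d) (v : 'cV[R]_d) : Prop := (v^T <= Z)%MS.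

Definition is_orth_proj (P Z : 'M[R]_d) : Prop :=
  forall v : 'cV[R]_d, insub Z (P *m v) /\
    (forall w : 'cV[R]_d, insub Z w -> w^T *m (v - P *m v) = 0).

Definition maps_onto (A Z Z' : 'M[R]_d) : Prop :=
  (forall v, insub Z v -> insub Z' (A *m v)) /\
  (forall w, insub Z' w -> exists2 v, insub Z v & w = A *m v).

Fixpoint thetabar (theta : nat -> 'M[R]_d) (s : nat) : 'M[R]_d :=
  match s with
  | 0 => 1%:M
  | s'.+1 => theta s' *m thetabar theta s'
  end.

Fixpoint Pts (theta P : nat -> 'M[R]_d) (t s : nat) : 'M[R]_d :=
  match s with
  | 0 => P t
  | s'.+1 => invmx (theta (t - s'.+1)%N) *m Pts theta P t s' *m theta (t - s'.+1)%N
  end.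

End Defs.

(* Main.v *)
Require Import Defs.
From HB Require Import structures.
From mathcomp Require Import all_boot all_order all_algebra.
From mathcomp Require Import classical_sets reals.
From mathcomp Require Import ring lra.
Import Order.TTheory GRing.Theory Num.Theory.
Local Open Scope ring_scope.
Set Implicit Arguments. Unset Strict Implicit. Unset Printing Implicit Defensive.

Section Aux.
Variable R : realType.
Variable d : nat.
Implicit Types x y z u v : 'cV[R]_d.

Definition dot x y : R := (x^T *m y) 0 0.

Lemma dotC x y : dot x y = dot y x.
Proof. by rewrite /dot !mxE; apply: eq_bigr => i _; rewrite !mxE mulrC. Qed.
Lemma dotDr x y z : dot x (y + z) = dot x y + dot x z.
Proof. by rewrite /dot mulmxDr mxE. Qed.
Lemma dotZr x c y : dot x (c *: y) = c * dot x y.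
Proof. by rewrite /dot -scalemxAr mxE. Qed.
Lemma dotNr x y : dot x (- y) = - dot x y.
Proof. by rewrite /dot mulmxN mxE. Qed.
Lemma dotBr x y z : dot x (y - z) = dot x y - dot x z.
Proof. by rewrite dotDr dotNr. Qed.
Lemma dotDl x y z : dot (y + z) x = dot y x + dot z x.
Proof. by rewrite dotC dotDr !(dotC x). Qed.
Lemma dotZl x c y : dot (c *: y) x = c * dot y x.
Proof. by rewrite dotC dotZr dotC. Qed.
Lemma dotBl x y z : dot (y - z) x = dot y x - dot z x.
Proof. by rewrite dotC dotBr !(dotC x). Qed.
Lemma dot0r x : dot x 0 = 0.
Proof. by rewrite /dot mulmx0 mxE. Qed.
Lemma dot_mul (M : 'M[R]_d) x y : dot (M *m x) y = dot x (M^T *m y).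
Proof. by rewrite /dot trmx_mul mulmxA. Qed.
Lemma dotxx x : dot x x = \sum_i (x i 0) ^+ 2.
Proof. by rewrite /dot mxE; apply: eq_bigr => i _; rewrite mxE expr2. Qed.
Lemma dot_ge0 x : 0 <= dot x x.
Proof. by rewrite dotxx; apply: sumr_ge0 => i _; apply: sqr_ge0. Qed.
Lemma vnorm_sq x : vnorm x ^+ 2 = dot x x.
Proof. by rewrite /vnorm -dotxx sqr_sqrtr // dot_ge0. Qed.
Lemma vnormE x : vnorm x = Num.sqrt (dot x x).
Proof. by rewrite /vnorm dotxx. Qed.
Lemma vnorm_ge0 x : 0 <= vnorm x.
Proof. exact: sqrtr_ge0. Qed.
Lemma dot_eq0 x : dot x x = 0 -> x = 0.
Proof.
rewrite dotxx => /eqP; rewrite psumr_eq0 => [/allP H|i _]; last exact: sqr_ge0.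
apply/matrixP => i j; rewrite ord1 mxE.
by have := H i (mem_index_enum i); rewrite implyTb sqrf_eq0 => /eqP.
Qed.
Lemma dot_comb a b u v : dot (a *: u + b *: v) (a *: u + b *: v) =
  a ^+ 2 * dot u u + 2 * a * b * dot u v + b ^+ 2 * dot v v.
Proof. rewrite dotDl !dotDr !dotZl !dotZr (dotC v u); ring. Qed.

Lemma CS x y : dot x y ^+ 2 <= dot x x * dot y y.
Proof.
have [y0|ny0] := eqVneq (dot y y) 0.
  by rewrite (dot_eq0 y0) dot0r expr0n /= mulr_ge0 // dot_ge0.
have cp : 0 < dot y y by rewrite lt_def ny0 dot_ge0.
have := dot_ge0 (dot y y *: x + (- dot x y) *: y); rewrite dot_comb => H.
have : 0 <= dot y y * (dot x x * dot y y - dot x y ^+ 2).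
  by apply: (le_trans H) => /=; rewrite le_eqVlt; apply/orP; left; apply/eqP; ring.
by rewrite pmulr_rge0 // subr_ge0.
Qed.
Lemma CS' x y : dot x y <= vnorm x * vnorm y.
Proof.
have := CS x y; rewrite -!vnorm_sq -exprMn => H.
have : Num.sqrt (dot x y ^+ 2) <= Num.sqrt ((vnorm x * vnorm y) ^+ 2).
  by rewrite ler_sqrt // sqr_ge0.
rewrite !sqrtr_sqr [`|vnorm x * _|]ger0_norm ?mulr_ge0 ?vnorm_ge0 //.
move=> H2; apply: le_trans H2; exact: ler_norm.
Qed.
Lemma CS'' x y : - (vnorm x * vnorm y) <= dot x y.
Proof.
have := CS x y; rewrite -!vnorm_sq -exprMn => H.
have : Num.sqrt (dot x y ^+ 2) <= Num.sqrt ((vnorm x * vnorm y) ^+ 2).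
  by rewrite ler_sqrt // sqr_ge0.
rewrite !sqrtr_sqr [`|vnorm x * _|]ger0_norm ?mulr_ge0 ?vnorm_ge0 //.
rewrite lerNl => H2; apply: le_trans H2; rewrite -normrN; exact: ler_norm.
Qed.

Lemma vnormZ c x : vnorm (c *: x) = `|c| * vnorm x.
Proof.
by rewrite !vnormE dotZl dotZr mulrA -expr2 sqrtrM ?sqr_ge0 // sqrtr_sqr.
Qed.

Lemma bound_mx (M : 'M[R]_d) : exists K, forall v, vnorm (M *m v) <= K * vnorm v.
Proof.
pose m i : 'cV[R]_d := \col_j M i j.
exists (Num.sqrt (\sum_i dot (m i) (m i))) => v.
have F0 : 0 <= \sum_i dot (m i) (m i) by apply: sumr_ge0 => i _; exact: dot_ge0.
rewrite !vnormE -sqrtrM // ler_sqrt; last by apply: mulr_ge0 => //; exact: dot_ge0.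
rewrite dotxx mulr_suml; apply: ler_sum => i _.
have -> : (M *m v) i 0 = dot (m i) v.
  by rewrite /dot !mxE; apply: eq_bigr => j _; rewrite !mxE.
exact: CS.
Qed.

Lemma opnorm_ub (M : 'M[R]_d) v : vnorm (M *m v) <= opnorm M * vnorm v.
Proof.
have [K HK] := bound_mx M.
have [v0|nv0] := eqVneq (vnorm v) 0.
  have : dot v v = 0 by rewrite -vnorm_sq v0 expr0n.
  by move/dot_eq0 => ->; rewrite mulmx0 !vnormE dot0r sqrtr0 mulr0.
have np : 0 < vnorm v by rewrite lt_def nv0 vnorm_ge0.
pose u := (vnorm v)^-1 *: v.
have u1 : vnorm u = 1 by rewrite vnormZ ger0_norm ?invr_ge0 ?vnorm_ge0 // mulVf.
have : vnorm (M *m u) <= opnorm M.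
  apply: ub_le_sup; last by exists u.
  exists K => _ [w /= w1 <-]; by rewrite -[K]mulr1 -w1 HK.
rewrite /u -scalemxAr vnormZ ger0_norm ?invr_ge0 ?vnorm_ge0 //.
by rewrite ler_pdivrMl // mulrC.
Qed.

Lemma unit_ex : (0 < d)%N -> exists u, vnorm u = 1.
Proof.
move=> d0; pose v : 'cV[R]_d := const_mx 1.
have vp : 0 < vnorm v.
  rewrite vnormE sqrtr_gt0 dotxx.
  rewrite (eq_bigr (fun _ => 1)); last by move=> i _; rewrite mxE expr1n.
  by rewrite sumr_const card_ord ltr0n.
exists ((vnorm v)^-1 *: v).
by rewrite vnormZ ger0_norm ?invr_ge0 ?vnorm_ge0 // mulVf // gt_eqF.
Qed.

Lemma opnorm_le (M : 'M[R]_d) c : (0 < d)%N ->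
  (forall v, vnorm v = 1 -> vnorm (M *m v) <= c) -> opnorm M <= c.
Proof.
move=> d0 H; apply: ge_sup.
  by have [u u1] := unit_ex d0; exists (vnorm (M *m u)), u.
by move=> _ [w /= w1 <-]; exact: H.
Qed.

Lemma opnorm_ge0 (M : 'M[R]_d) : (0 < d)%N -> 0 <= opnorm M.
Proof.
move=> d0; have [u u1] := unit_ex d0.
have := opnorm_ub M u; rewrite u1 mulr1; apply: le_trans; exact: vnorm_ge0.
Qed.

End Aux.
Section B.
Variable R : realType.
Variable d : nat.

Lemma arith (p q X t n : R) : 0 <= p -> 0 <= q -> 0 <= X -> 0 <= n -> n <= 1 ->
  0 <= t -> p - 1 <= X -> q * (1 - X) <= 1 -> 2 * t <= (p * q - 1) * n ->
  t <= (1 + p * q) * X.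
Proof.
move=> p0 q0 X0 n0 n1 t0 h1 h2 h3.
have [pq1|pq1] := lerP (p * q) 1.
  have : (p * q - 1) * n <= 0 by nra.
  move=> h; have : t <= 0 by lra.
  move=> h'; apply: le_trans h' _; apply: mulr_ge0 => //; have := mulr_ge0 p0 q0; lra.
have h4 : 2 * t <= p * q - 1 by nra.
suff : p * q - 1 <= 2 * ((1 + p * q) * X) by lra.
have [hq|hq] := lerP q (p * q + 1).
  have : q * X >= q - 1 by nra.
  have : 0 <= q * (X - (p - 1)) by apply: mulr_ge0 => //; lra.
  move=> h5 h6.
  have : 2 * q * X >= p * q - 1 by nra.
  move=> h7.
  have : 0 <= (1 + p * q - q) * X by apply: mulr_ge0 => //; lra.
  nra.
have : q * X >= q - 1 by nra.
move=> h5.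
have : 0 <= (1 + p * q) * (q * X - (q - 1)) by apply: mulr_ge0; lra.
move=> h6.
have : (p * q - 1) * q <= 2 * ((1 + p * q) * X) * q by nra.
move=> h7.
have qp : 0 < q by lra.
by rewrite -(ler_pM2r qp).
Qed.
End B.
Section C.
Variable R : realType.
Variable d : nat.

Lemma invmxM' (A B : 'M[R]_d) : A \in unitmx -> B \in unitmx ->
  invmx (A *m B) = invmx B *m invmx A.
Proof.
move=> uA uB; have uAB : A *m B \in unitmx by rewrite unitmx_mul uA.
rewrite -[RHS]mul1mx -(mulVmx uAB) -!mulmxA (mulmxA B) mulmxV // mul1mx.
by rewrite mulmxV // mulmx1.
Qed.

Fixpoint D (theta : nat -> 'M[R]_d) (m k : nat) : 'M[R]_d :=
  match k with 0 => 1%:M | k'.+1 => theta (m + k')%N *m D theta m k' end.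

Lemma D_r theta m k : D theta m k.+1 = D theta m.+1 k *m theta m.
Proof.
elim: k m => [|k IH] m; first by rewrite /= addn0 mul1mx mulmx1.
change (theta (m + k.+1)%N *m D theta m k.+1 = theta (m.+1 + k)%N *m D theta m.+1 k *m theta m).
by rewrite IH mulmxA addSnnS.
Qed.

Lemma thetabarD theta k : thetabar theta k = D theta 0 k.
Proof. by elim: k => [|k IH] //=; rewrite add0n IH. Qed.

Lemma D_unit theta m k : (forall t, (t < m + k)%N -> theta t \in unitmx) ->
  D theta m k \in unitmx.
Proof.
elim: k => [|k IH] hu /=; first exact: unitmx1.
rewrite unitmx_mul hu ?addnS // IH // => t ht; apply: hu.
by rewrite addnS ltnS ltnW.
Qed.

Lemma Pts_formula theta P s k : (forall t, (t < s)%N -> theta t \in unitmx) ->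
  (k <= s)%N ->
  Pts theta P s k = invmx (D theta (s - k) k) *m P s *m D theta (s - k) k.
Proof.
move=> hu; elim: k => [|k IH] hk.
  by rewrite /= invmx1 mul1mx mulmx1.
rewrite [LHS]/= IH ?(ltnW hk) // D_r subnSK //.
rewrite invmxM'; first by rewrite !mulmxA.
  by apply: D_unit => t; rewrite subnK ?(ltnW hk) //; exact: hu.
by apply: hu; rewrite subnSK // -subnSK // ltn_subrL; apply/andP; split; last exact: leq_ltn_trans hk.
Qed.

Lemma proj_fix (P Z : 'M[R]_d) y : is_orth_proj P Z -> Defs.insub Z y -> P *m y = y.
Proof.
move=> hP hy; have [hPy hort] := hP y.
have h1 := hort y hy; have h2 := hort _ hPy.
have e1 : dot y (y - P *m y) = 0 by rewrite /dot h1 mxE.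
have e2 : dot (P *m y) (y - P *m y) = 0 by rewrite /dot h2 mxE.
have : dot (y - P *m y) (y - P *m y) = 0 by rewrite dotBl e1 e2 subr0.
by move/dot_eq0/eqP; rewrite subr_eq0 => /eqP.
Qed.

Lemma reach theta (Z : nat -> 'M[R]_d) T :
  (forall t, (t < T)%N -> maps_onto (theta t) (Z t) (Z t.+1)) ->
  forall k, (k <= T)%N ->
  (forall u, Defs.insub (Z 0%N) u -> Defs.insub (Z k) (thetabar theta k *m u)) /\
  (forall y, Defs.insub (Z k) y -> exists2 u, Defs.insub (Z 0%N) u & y = thetabar theta k *m u).
Proof.
move=> hm; elim=> [|k IH] hk.
  split=> [u|y] /=; first by rewrite mul1mx.
  by move=> hy; exists y; rewrite ?mul1mx.
have [h1 h2] := hm k hk; have [i1 i2] := IH (ltnW hk).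
split=> [u hu|y hy] /=; first by rewrite -mulmxA; apply: h1; apply: i1.
have [v hv ->] := h2 y hy; have [u hu ->] := i2 v hv.
by exists u; rewrite // mulmxA.
Qed.

End C.
Section E.
Variable R : realType.
Variable d : nat.

Lemma sq_ub (M : 'M[R]_d) z : dot (M *m z) (M *m z) <= opnorm M ^+ 2 * dot z z.
Proof.
have h := opnorm_ub M z.
have h0 := vnorm_ge0 (M *m z).
have := ler_pM h0 h0 h h; rewrite -vnorm_sq -expr2 => h1.
apply: le_trans h1 _; rewrite -vnorm_sq; rewrite le_eqVlt; apply/orP; left; apply/eqP; ring. 
Qed.

Lemma quad_bounds (B : 'M[R]_d) x :
  dot x x - opnorm (1%:M - B^T *m B) * dot x x <= dot (B *m x) (B *m x) /\
  dot (B *m x) (B *m x) <= dot x x + opnorm (1%:M - B^T *m B) * dot x x.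
Proof.
set M := 1%:M - B^T *m B; set X := opnorm M.
have eM : M *m x = x - B^T *m (B *m x) by rewrite /M mulmxBl mul1mx mulmxA.
have e : dot (B *m x) (B *m x) = dot x x - dot x (M *m x).
  by rewrite dot_mul eM dotBr opprB addrC subrK.
have h1 := CS' x (M *m x); have h2 := CS'' x (M *m x).
have h3 := opnorm_ub M x.
have h4 : vnorm x * vnorm (M *m x) <= X * dot x x.
  have := ler_wpM2l (vnorm_ge0 x) h3.
  move=> h5; apply: le_trans h5 _; rewrite -vnorm_sq.
  rewrite le_eqVlt; apply/orP; left; apply/eqP; rewrite /X; ring.
rewrite e; split; lra.
Qed.

Lemma F3 (B : 'M[R]_d) : (0 < d)%N ->
  opnorm B ^+ 2 <= 1 + opnorm (1%:M - B^T *m B).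
Proof.
move=> d0; set X := opnorm (1%:M - B^T *m B).
have X0 : 0 <= X by exact: opnorm_ge0.
have h : opnorm B <= Num.sqrt (1 + X).
  apply: opnorm_le => // v v1.
  have [_ h] := quad_bounds B v.
  rewrite vnormE ler_sqrt; last lra.
  by move: h; rewrite -(vnorm_sq v) v1 expr1n mulr1.
have a0 := opnorm_ge0 B d0.
have := ler_pM a0 a0 h h; rewrite -!expr2 sqr_sqrtr //; lra.
Qed.

Lemma F4 (B : 'M[R]_d) : (0 < d)%N -> B \in unitmx ->
  opnorm (invmx B) ^+ 2 * (1 - opnorm (1%:M - B^T *m B)) <= 1.
Proof.
move=> d0 uB; set X := opnorm (1%:M - B^T *m B).
have b0 := opnorm_ge0 (invmx B) d0.
have [X1|X1] := lerP 1 X.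
  have : 0 <= opnorm (invmx B) ^+ 2 by exact: sqr_ge0.
  nra.
have c0 : 0 < 1 - X by lra.
have h : opnorm (invmx B) <= Num.sqrt ((1 - X)^-1).
  apply: opnorm_le => // y y1.
  have [h _] := quad_bounds B (invmx B *m y).
  move: h; rewrite mulKVmx // -(vnorm_sq y) y1 expr1n => h.
  rewrite vnormE ler_sqrt; last by rewrite invr_ge0 ltW.
  rewrite -(mul1r ((1 - X)^-1)) ler_pdivlMr //; move: h; rewrite -/X; lra.
have := ler_pM b0 b0 h h; rewrite -!expr2 sqr_sqrtr; last by rewrite invr_ge0 ltW.
by rewrite -(mul1r ((1 - X)^-1)) ler_pdivlMr.
Qed.

Lemma kappa_ge1 (B : 'M[R]_d) : (0 < d)%N -> B \in unitmx ->
  1 <= opnorm B * opnorm (invmx B).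
Proof.
move=> d0 uB; have [u u1] := @unit_ex R d d0.
have h1 := opnorm_ub (invmx B) (B *m u).
have h2 := opnorm_ub B u.
rewrite mulKmx // u1 in h1; rewrite u1 mulr1 in h2.
apply: le_trans h1 _; rewrite mulrC; apply: ler_wpM2r => //.
exact: opnorm_ge0.
Qed.

End E.
Unset Implicit Arguments.

Theorem mainTheorem7 (R : realType) (r d T : nat)
  (Z : nat -> 'M[R]_d) (P : nat -> 'M[R]_d) (theta : nat -> 'M[R]_d) :
  (1 <= r)%N -> (r <= d)%N -> (1 <= T)%N ->
  (forall t, (t <= T)%N -> \rank (Z t) = r) ->
  (forall t, (t <= T)%N -> is_orth_proj (P t) (Z t)) ->
  (forall t, (t < T)%N -> theta t \in unitmx) ->
  (forall t, (t < T)%N -> maps_onto (theta t) (Z t) (Z t.+1)) ->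
  forall s, (s <= T)%N ->
    opnorm (Pts theta P s s - P 0%N) <=
      (1 + kappa (thetabar theta s) ^+ 2) *
      opnorm (1%:M - (thetabar theta s)^T *m thetabar theta s).
Proof.
move=> r1 rd T1 hrank hproj hunit hmaps s hs.
have d0 : (0 < d)%N by apply: leq_trans rd.
set B := thetabar theta s.
have uB : B \in unitmx.
  rewrite /B thetabarD; apply: D_unit => t ht; apply: hunit.
  by apply: leq_trans hs.
have -> : Pts theta P s s = invmx B *m P s *m B.
  rewrite Pts_formula // ?subnn /B ?thetabarD // => t ht.
  by apply: hunit; apply: leq_trans hs.
set X := opnorm (1%:M - B^T *m B).
set a := opnorm B; set b := opnorm (invmx B).
have X0 : 0 <= X by exact: opnorm_ge0.
have a0 : 0 <= a by exact: opnorm_ge0.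
have b0 : 0 <= b by exact: opnorm_ge0.
have hF3 : a ^+ 2 - 1 <= X by have := F3 B d0; rewrite -/a -/X; lra.
have hF4 : b ^+ 2 * (1 - X) <= 1 by exact: F4.
have hk1 : 1 <= a * b by exact: kappa_ge1.
have [reach1 reach2] := reach hmaps hs.
apply: opnorm_le => // v v1.
set Q := invmx B *m P s *m B.
set p := P 0%N *m v; set v' := v - p.
have [hp_in hp_ort] := hproj 0%N (leq0n _) v.
have ort0 : forall u, Defs.insub (Z 0%N) u -> dot u v' = 0.
  by move=> u hu; rewrite /dot hp_ort // mxE.
have hQp : Q *m p = p.
  rewrite /Q -!mulmxA (@proj_fix R d (P s) (Z s)) ?mulKmx //; first exact: hproj.
  exact: reach1.
have eE : (Q - P 0%N) *m v = Q *m v'.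
  by rewrite mulmxBl /v' mulmxBr hQp.
rewrite eE.
set w := Q *m v'.
have hBw : B *m w = P s *m (B *m v').
  by rewrite /w /Q -!mulmxA mulKVmx.
have [hPs_in hPs_ort] := hproj s hs (B *m v').
have [u hu eu] := reach2 _ hPs_in.
have ew : w = u by rewrite /w /Q -!mulmxA eu mulKmx.
have hw_in : Defs.insub (Z 0%N) w by rewrite ew.
have hwv : dot w v' = 0 by exact: ort0.
set y := B *m w.
have hyy : dot y y = dot y (B *m v').
  have : dot y (B *m v' - y) = 0.
    by rewrite /dot /y hBw hPs_ort // mxE.
  by rewrite dotBr => /eqP; rewrite subr_eq0 => /eqP ->.
have ev : v = v' + p by rewrite /v' subrK.
clearbody v'.
set t := vnorm w; set n := vnorm v'.
have t0 : 0 <= t by exact: vnorm_ge0.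
have n0 : 0 <= n by exact: vnorm_ge0.
have n1 : n <= 1.
  have : dot v v = dot v' v' + dot p p.
    rewrite ev dotDl !dotDr (dotC v' p) (ort0 p hp_in).
    by rewrite addr0 add0r.
  rewrite -(vnorm_sq v) v1 -(vnorm_sq v') -/n expr1n => h.
  have := dot_ge0 p; nra.
have key : 2 * t <= (a ^+ 2 * b ^+ 2 - 1) * n.
  have kp : 0 <= a ^+ 2 * b ^+ 2 - 1.
    by rewrite -exprMn subr_ge0 -(expr1n _ 2) ler_pXn2r // ?nnegrE ?mulr_ge0.
  have [nz|nnz] := eqVneq n 0.
    have : v' = 0 by apply: dot_eq0; rewrite -vnorm_sq -/n nz expr0n.
    move=> v0; have : t = 0 by rewrite /t /w v0 mulmx0 vnormE dot0r sqrtr0.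
    by move=> ->; rewrite nz !mulr0.
  have [tz|tnz] := eqVneq t 0.
    by rewrite tz mulr0; apply: mulr_ge0.
  have np : 0 < n by rewrite lt_def nnz n0.
  have tp : 0 < t by rewrite lt_def tnz t0.
  set c := dot y (B *m v'); set bb := dot (B *m v') (B *m v').
  have Lw : t ^+ 2 <= b ^+ 2 * c.
    have := sq_ub (invmx B) (B *m w); rewrite mulKmx // -/b -/y hyy -/c.
    by rewrite vnorm_sq.
  have eB : forall l, B *m (1 *: w + l *: v') = 1 *: y + l *: (B *m v').
    by move=> l; rewrite mulmxDr -!scalemxAr.
  have ez : forall l, dot (1 *: w + l *: v') (1 *: w + l *: v') = t ^+ 2 + l ^+ 2 * n ^+ 2.
    by move=> l; rewrite dot_comb hwv !vnorm_sq; ring.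
  have ey : forall l, dot (1 *: y + l *: (B *m v')) (1 *: y + l *: (B *m v')) =
      c + 2 * l * c + l ^+ 2 * bb.
    by move=> l; rewrite dot_comb hyy -/c -/bb; ring.
  set l := t / n.
  have U := sq_ub B (1 *: w + l *: v'); rewrite eB ey ez -/a in U.
  have L := sq_ub (invmx B) (B *m (1 *: w + (- l) *: v')).
  rewrite mulKmx // eB ey ez -/b in L.
  have U' := ler_wpM2l (sqr_ge0 b) U.
  have h1 : 4 * l * (b ^+ 2 * c) <= (a ^+ 2 * b ^+ 2 - 1) * (t ^+ 2 + l ^+ 2 * n ^+ 2).
    move: U' L; rewrite !sqrrN; lra.
  have eln : l * n = t by rewrite /l divfK.
  have l0 : 0 <= l by rewrite /l divr_ge0.
  have h2 : l ^+ 2 * n ^+ 2 = t ^+ 2 by rewrite -exprMn eln.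
  rewrite h2 in h1.
  have h3 : 4 * l * t ^+ 2 <= 4 * l * (b ^+ 2 * c).
    by apply: ler_wpM2l => //; rewrite mulr_ge0.
  have t2 : 0 < t ^+ 2 by rewrite exprn_gt0.
  have h4 : (2 * l) * t ^+ 2 <= (a ^+ 2 * b ^+ 2 - 1) * t ^+ 2.
    have := le_trans h3 h1; lra.
  rewrite ler_pM2r // in h4.
  rewrite -eln mulrA; apply: ler_wpM2r => //.
have := arith (p := a ^+ 2) (q := b ^+ 2) (X := X) (t := t) (n := n).
rewrite /kappa -/a -/b exprMn; apply => //; exact: sqr_ge0.
Qed.
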